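(* Let $(\Omega,\Sigma,\mu)$ be a finite measure space, let $X(\mu)$ be a strictly rectangular function space, let $f\in L^0(\mu)$ with $f\ge0$, and let $A_1,\dots,A_n\in\Sigma_f$ be pairwise disjoint. If $0\le a_j\le b_j$ for $j=1,\dots,n$, then $$\Big\|\sum_{j=1}^n a_j\chi_{A_j}f\Big\|\le\Big\|\sum_{j=1}^n b_j\chi_{A_j}f\Big\|.$$
   Context: $L^0(\mu)$ is the space of equivalence classes (modulo $\mu$-a.e. equality) of real $\Sigma$-measurable functions. A strictly rectangular function space is a vector subspace $X(\mu)\subseteq L^0(\mu)$ with a norm such that $\chi_Ah\in X(\mu)$ and $\|\chi_Ah\|\le\|h\|$ for all $h\in X(\mu)$, $A\in\Sigma$. $\Sigma_f=\{A\in\Sigma: f\chi_A\in X(\mu)\}$. *)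

(* Defs.v *)
From HB Require Import structures.
From mathcomp Require Import all_boot all_order all_algebra.
From mathcomp Require Import all_classical all_reals all_analysis.
Set Implicit Arguments. Unset Strict Implicit. Unset Printing Implicit Defensive.
Import Order.TTheory GRing.Theory Num.Theory.
Local Open Scope classical_set_scope.
Local Open Scope ring_scope.

(* Elements of L^0(mu) are represented by measurable functions T -> R;
   equality in L^0(mu) is mu-a.e. equality.  A function space X(mu) is given
   by a set X of (representatives of) functions together with a norm nrm,
   both required to be invariant under mu-a.e. equality (so they are
   well defined on equivalence classes). *)

Definition ae_eq d (T : measurableType d) (R : realType)
  (mu : {measure set T -> \bar R}) (f g : T -> R) : Prop :=
  {ae mu, forall x, f x = g x}.

Record strictly_rectangular d (T : measurableType d) (R : realType)
  (mu : {measure set T -> \bar R}) (X : set (T -> R)) (nrm : (T -> R) -> R)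
  : Prop := {
  sr_meas : forall f, X f -> measurable_fun setT f;
  sr_ae_mem : forall f g, X f -> measurable_fun setT g -> ae_eq mu f g -> X g;
  sr_ae_norm : forall f g, X f -> X g -> ae_eq mu f g -> nrm f = nrm g;
  sr_zero : X (fun _ => 0);
  sr_add : forall f g, X f -> X g -> X (f \+ g);
  sr_scale : forall (k : R) f, X f -> X (fun x => k * f x);
  sr_norm_ge0 : forall f, X f -> 0 <= nrm f;
  sr_norm_eq0 : forall f, X f -> nrm f = 0 -> ae_eq mu f (fun _ => 0);
  sr_normZ : forall (k : R) f, X f -> nrm (fun x => k * f x) = `|k| * nrm f;
  sr_normD : forall f g, X f -> X g -> nrm (f \+ g) <= nrm f + nrm g;
  sr_indic_mem : forall (A : set T) h, measurable A -> X h ->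
    X (fun x => \1_A x * h x);
  sr_indic_norm : forall (A : set T) h, measurable A -> X h ->
    nrm (fun x => \1_A x * h x) <= nrm h
}.

Definition Sigma_f d (T : measurableType d) (R : realType)
  (X : set (T -> R)) (f : T -> R) : set (set T) :=
  [set A | measurable A /\ X (fun x => f x * \1_A x)].

(* Main.v *)
Require Import Defs.
From HB Require Import structures.
From mathcomp Require Import all_boot all_order all_algebra.
From mathcomp Require Import all_classical all_reals all_analysis.
From mathcomp Require Import ring lra.
Import Order.TTheory GRing.Theory Num.Theory.
Local Open Scope classical_set_scope.
Local Open Scope ring_scope.

Section S.
Variables (d : measure_display) (T : measurableType d) (R : realType)
  (mu : {finite_measure set T -> \bar R})
  (X : set (T -> R)) (nrm : (T -> R) -> R)
  (HX : strictly_rectangular mu X nrm)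
  (f : T -> R) (n : nat) (A : 'I_n -> set T)
  (HA : forall j, Sigma_f X f (A j))
  (Hdisj : forall i j, i != j -> A i `&` A j = set0).

Let G (c : 'I_n -> R) := fun x => \sum_(j < n) c j * \1_(A j) x * f x.

Lemma memG c : X (G c).
Proof.
rewrite /G; elim: (index_enum _) => [|j s IH].
  have -> : (fun x => \sum_(j <- [::]) c j * \1_(A j) x * f x) = fun _ => 0.
    by apply/funext => x; rewrite big_nil.
  exact: sr_zero HX.
have -> : (fun x => \sum_(i <- j :: s) c i * \1_(A i) x * f x) =
  (fun x => c j * (f x * \1_(A j) x)) \+ (fun x => \sum_(i <- s) c i * \1_(A i) x * f x).
  apply/funext => x; rewrite big_cons /=; congr (_ + _).
  by rewrite -mulrA [f x * _]mulrC.
apply: (sr_add HX _ IH); apply: (sr_scale HX); exact: (HA j).2.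
Qed.

Lemma indicG c j x : \1_(A j) x * G c x = c j * \1_(A j) x * f x.
Proof.
rewrite /G big_distrr /= (bigD1 j) //= big1.
  rewrite addr0 !indicE; case: (x \in A j) => /=; by rewrite ?mul1r ?mulr1 ?mul0r ?mulr0 ?mul0r.
move=> i ij; rewrite !indicE.
case xj: (x \in A j); last by rewrite /= mul0r.
case xi: (x \in A i); last by rewrite /= mulr0 mul0r mulr0.
exfalso; have : (A i `&` A j) x.
  by split; apply/set_mem; [rewrite xi|rewrite xj].
by rewrite Hdisj.
Qed.

Lemma step (c c' : 'I_n -> R) j : (forall i, i != j -> c i = c' i) ->
  0 <= c j -> c j <= c' j -> nrm (G c) <= nrm (G c').
Proof.
move=> Hne c0 cc.
have [c'0|c'n0] := eqVneq (c' j) 0.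
  have -> : c = c'.
    apply/funext => i; have [->|/Hne //] := eqVneq i j.
    by apply/eqP; rewrite eq_le c'0 (le_trans cc) ?c'0 // c0.
  by [].
have c'p : 0 < c' j by rewrite lt_neqAle eq_sym c'n0 (le_trans c0 cc).
set s := (c' j - c j) / c' j.
have s0 : 0 <= s by rewrite divr_ge0 // ?subr_ge0 // ltW.
have s1 : s <= 1 by rewrite ler_pdivrMr // mul1r lerBlDr lerDl.
have -> : G c = (fun x => (1 - s) * G c' x) \+
   (fun x => s * (\1_(~` A j) x * G c' x)).
  apply/funext => x /=.
  have Hd : G c' x - G c x = (c' j - c j) * \1_(A j) x * f x.
    rewrite /G -sumrB (bigD1 j) //= big1 ?addr0; first by rewrite -!mulrBl.
    by move=> i /Hne ->; rewrite subrr.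
  have Hc : \1_(~` A j) x = 1 - \1_(A j) x :> R.
    by rewrite !indicE in_setC; case: (x \in A j); rewrite /= ?subrr ?subr0.
  have E : s * ((1 - \1_(A j) x) * G c' x) = s * G c' x - s * (\1_(A j) x * G c' x) by ring.
  rewrite Hc E indicG.
  have -> : s * (c' j * \1_(A j) x * f x) = (c' j - c j) * \1_(A j) x * f x.
    by rewrite /s; field.
  rewrite -Hd; ring.
have mG := memG c'.
have mC : X (fun x => \1_(~` A j) x * G c' x).
  by apply: (sr_indic_mem HX) => //; apply: measurableC; exact: (HA j).1.
apply: le_trans (sr_normD HX _ _) _.
- exact: sr_scale HX _ _ mG.
- exact: sr_scale HX _ _ mC.
rewrite !(sr_normZ HX) // ger0_norm ?subr_ge0 // ger0_norm //.
have := sr_indic_norm HX (measurableC (HA j).1) mG.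
move=> H; have := ler_wpM2l s0 H; lra.
Qed.

Lemma chain (a b : 'I_n -> R) : (forall j, 0 <= a j /\ a j <= b j) ->
  nrm (G a) <= nrm (G b).
Proof.
move=> Hab.
pose c (k : nat) := fun i : 'I_n => if (i < k)%N then b i else a i.
have Hk : forall k, nrm (G (c k)) <= nrm (G (c k.+1)).
  move=> k; case: (ltnP k n) => kn.
    apply: (@step _ _ (Ordinal kn)).
    - move=> i ij; rewrite /c; have -> : (i < k.+1)%N = (i < k)%N; last by [].
      rewrite ltnS leq_eqVlt; suff -> : (nat_of_ord i == k) = false by [].
      by apply/negbTE; apply: contra ij => /eqP e; apply/eqP/val_inj.
    - by rewrite /c /= ltnn; case: (Hab (Ordinal kn)).
    - by rewrite /c /= ltnn ltnSn; case: (Hab (Ordinal kn)).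
  have -> : c k.+1 = c k; last by [].
  apply/funext => i; rewrite /c.
  by rewrite (leq_trans (ltn_ord i) kn) (leq_trans (ltn_ord i) (leqW kn)).
have Ha : c 0%N = a by apply/funext => i; rewrite /c ltn0.
have Hb : c n = b by apply/funext => i; rewrite /c ltn_ord.
have Hall : forall k, nrm (G (c 0%N)) <= nrm (G (c k)).
  by elim => [|k IH] //; apply: le_trans IH (Hk k).
by rewrite -Ha -Hb; apply: Hall.
Qed.
End S.

Theorem lemma3p3 (d : measure_display) (T : measurableType d) (R : realType)
  (mu : {finite_measure set T -> \bar R})
  (X : set (T -> R)) (nrm : (T -> R) -> R)
  (HX : strictly_rectangular mu X nrm)
  (f : T -> R) (mf : measurable_fun setT f)
  (f_ge0 : {ae mu, forall x, 0 <= f x})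
  (n : nat) (A : 'I_n -> set T)
  (HA : forall j, Sigma_f X f (A j))
  (Hdisj : forall i j, i != j -> A i `&` A j = set0)
  (a b : 'I_n -> R)
  (Hab : forall j, 0 <= a j /\ a j <= b j) :
  nrm (fun x => \sum_(j < n) a j * \1_(A j) x * f x)
    <= nrm (fun x => \sum_(j < n) b j * \1_(A j) x * f x).
Proof. exact: (@chain d T R mu X nrm HX f n A HA Hdisj a b Hab). Qed.
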